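(* Let $\{A_t:\ t\in T_1\cup T_2\}$ be a family of nonempty subsets of $X$ (or of $X^*$), where $T_1,T_2$ are disjoint nonempty index sets. Then for every $m>0$, \[ \Big[\overline{\operatorname{co}}\Big(\bigcup_{t\in T_1\cup T_2}A_t\Big)\Big]_\infty=\Big[\overline{\operatorname{co}}\Big(\Big(\bigcup_{t\in T_1}A_t\Big)\cup\Big(\bigcup_{t\in T_2}mA_t\Big)\Big)\Big]_\infty=\Big[\overline{\operatorname{co}}\Big(\bigcup_{t_1\in T_1,\,t_2\in T_2}(A_{t_1}+mA_{t_2})\Big)\Big]_\infty . \]
   Context: $X$ is a real separated locally convex space with dual $X^*$ carrying the weak$^*$ topology (closures in $X^*$ are weak$^*$-closures). $\overline{\operatorname{co}}$ denotes the closed convex hull, $+$ the Minkowski sum, and $mA=\{ma: a\in A\}$. For a nonempty closed convex set $C$, its recession cone is $C_\infty:=\{y:\ z+\lambda y\in C\text{ for some } z\in C \text{ and all }\lambda\ge 0\}$. *)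

(* Defs.v *)
From HB Require Import structures.
From mathcomp Require Import all_boot all_order all_algebra.
From mathcomp Require Import all_classical all_reals all_analysis.
Set Implicit Arguments. Unset Strict Implicit. Unset Printing Implicit Defensive.
Import Order.TTheory GRing.Theory Num.Theory.
Local Open Scope classical_set_scope.
Local Open Scope ring_scope.

Definition clconv (R : realType) (X : tvsType R) (A : set X) : set X :=
  \bigcap_(C in [set C : set X | convex_set (C : set (convex_lmodType X))
                                  /\ closed C /\ A `<=` C]) C.

Definition rec_cone (R : realType) (X : tvsType R) (C : set X) : set X :=
  [set y | exists2 z, C z & forall l : R, 0 <= l -> C (z + l *: y)].

Definition mink_sum (R : realType) (X : tvsType R) (A B : set X) : set X :=
  [set z | exists2 a, A a & exists2 b, B b & z = a + b].
Definition sscale (R : realType) (X : tvsType R) (m : R) (A : set X) : set X :=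
  [set z | exists2 a, A a & z = m *: a].

(* Main.v *)
Require Import Defs.
From HB Require Import structures.
From mathcomp Require Import all_boot all_order all_algebra.
From mathcomp Require Import all_classical all_reals all_analysis.
From mathcomp Require Import ring.
Import Order.TTheory GRing.Theory Num.Theory.
Import numFieldNormedType.Exports.
Import Num.Def.
Set Bullet Behavior "Strict Subproofs".
Local Open Scope classical_set_scope.
Local Open Scope ring_scope.

Section S.
Context (R : realType) (X : tvsType R).

Lemma convP (C : set X) : convex_set (C : set (convex_lmodType X)) ->
  forall a b (l : R), 0 <= l -> l <= 1 -> C a -> C b -> C (l *: a + (1-l) *: b).
Proof.
move=> cC a b l l0 l1 Ca Cb.
have := cC a b (Itv01 l0 l1). rewrite !in_setE. move=> /(_ Ca Cb). rewrite /conv/=.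
by [].
Qed.

Lemma convI (C : set X) : (forall a b (l : R), 0 <= l -> l <= 1 -> C a -> C b -> C (l *: a + (1-l) *: b)) ->
   convex_set (C : set (convex_lmodType X)).
Proof.
move=> h a b l; rewrite !in_setE => Ca Cb; rewrite /conv/=.
exact: (h a b l%:num (ge0 _) (le1 _) Ca Cb).
Qed.

Lemma clconv_closed (S : set X) : closed (clconv S).
Proof.
by apply: closed_bigI => C [_ []].
Qed.

Lemma clconv_convex (S : set X) : forall a b (l : R), 0 <= l -> l <= 1 ->
  clconv S a -> clconv S b -> clconv S (l *: a + (1-l) *: b).
Proof.
move=> a b l l0 l1 Ca Cb C hC.
have [cC _] := hC.
exact: convP cC _ _ _ l0 l1 (Ca C hC) (Cb C hC).
Qed.

Lemma clconv_sub (S : set X) : S `<=` clconv S.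
Proof. by move=> a Sa C [_ [_ SC]]; exact: SC. Qed.

Lemma clconv_min (S F : set X) : (forall a b (l : R), 0 <= l -> l <= 1 -> F a -> F b -> F (l *: a + (1-l) *: b)) ->
  closed F -> S `<=` F -> clconv S `<=` F.
Proof. by move=> cF clF SF a; apply; split; [exact: convI|split]. Qed.


Lemma scale_cont_l (s : R) : continuous (fun p : X => s *: p).
Proof.
move=> p.
change ({for p, continuous ((fun q : R^o * X => q.1 *: q.2) \o (fun p : X => ((s : R^o), p)))}).
apply: continuous_comp.
  rewrite /prop_for /continuous_at; by apply: (@cvg_pair _ _ _ _ (nbhs (s : R^o))); [exact: cvg_cst | exact: cvg_id].
exact: scale_continuous.
Qed.

Lemma add_cont_l (a : X) : continuous (fun p : X => a + p).
Proof.
move=> p.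
change ({for p, continuous ((fun q : X * X => q.1 + q.2) \o (fun p : X => (a, p)))}).
apply: continuous_comp.
  rewrite /prop_for /continuous_at; by apply: (@cvg_pair _ _ _ _ (nbhs a)); [exact: cvg_cst | exact: cvg_id].
exact: add_continuous.
Qed.

Lemma aff_cont (a : X) (s : R) : continuous (fun p : X => a + s *: p).
Proof.
move=> p.
change ({for p, continuous ((fun q : X => a + q) \o (fun p : X => s *: p))}).
apply: continuous_comp.
  exact: scale_cont_l.
exact: add_cont_l.
Qed.

Lemma line_cvg (z v : X) : (fun mu : R => z + mu *: v) @ (0:R) --> z.
Proof.
have h1 : (fun mu : R => mu *: v) @ (0:R) --> (0:X).
  rewrite -[X in _ --> X](scale0r v).
  apply: (@continuous_comp R^o (R^o * X)%type X (fun mu => (mu, v)) (fun q => q.1 *: q.2) 0).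
    by apply: (@cvg_pair _ _ _ _ (nbhs (0 : R^o)) (nbhs v)); [exact: cvg_id | exact: cvg_cst].
  exact: scale_continuous.
have h2 : (fun q : X => z + q) @ (0:X) --> z.
  have := add_cont_l z 0. rewrite /continuous_at. rewrite addr0. by [].
exact: (cvg_comp _ _ h1 h2).
Qed.


Lemma closure_convex (F : set X) :
  (forall a b (l : R), 0 <= l -> l <= 1 -> F a -> F b -> F (l *: a + (1-l) *: b)) ->
  (forall a b (l : R), 0 <= l -> l <= 1 -> closure F a -> closure F b -> closure F (l *: a + (1-l) *: b)).
Proof.
move=> cF a b l l0 l1 ca cb N hN.
pose f := fun q : X * X => l *: q.1 + (1-l) *: q.2.
have fc : f @ (a, b) --> f (a, b).
  have h1 : (fun q : X * X => (l *: q.1, (1-l) *: q.2)) @ (a, b) --> (l *: a, (1-l) *: b).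
    apply: (@cvg_pair _ _ _ _ (nbhs (l *: a)) (nbhs ((1-l) *: b))).
      apply: cvg_comp; [exact: cvg_fst | exact: scale_cont_l].
    apply: cvg_comp; [exact: cvg_snd | exact: scale_cont_l].
  exact: (cvg_comp (fun q : X * X => (l *: q.1, (1-l) *: q.2)) (fun q : X * X => q.1 + q.2) h1 (add_continuous (l *: a, (1-l) *: b))).
have := fc N hN.
case=> [[U V] /= [hU hV] hUV].
have [p [Fp Up]] := ca U hU.
have [q [Fq Vq]] := cb V hV.
exists (f (p, q)); split; first exact: cF.
exact: (hUV (p, q)).
Qed.


Lemma idA1 (k l a1 a2 : R) (a b c w : X) :
  l *: (k *: a + c + a1 *: w) + (1 - l) *: (k *: b + c + a2 *: w)
  = k *: (l *: a + (1 - l) *: b) + c + (l * a1 + (1 - l) * a2) *: w.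
Proof.
have ec : c = l *: c + (1-l) *: c by rewrite -scalerDl addrC subrK scale1r.
rewrite [in RHS]ec !scalerDr !scalerA [(l * a1 + _) *: w]scalerDl.
rewrite [k * l]mulrC [k * (1 - l)]mulrC.
set A := (l * k) *: a; set B := ((1-l) * k) *: b; set C1 := l *: c; set C2 := (1 - l) *: c.
set W1 := (l * a1) *: w; set W2 := ((1-l) * a2) *: w.
rewrite -!addrA; congr (_ + _).
by rewrite [W1 + _]addrCA [W1 + _]addrCA addrCA.
Qed.

Lemma idA2 (mu k lam t : R) (d0 c x y : X) : mu * k * lam = t ->
  ((1 - mu) *: d0 + mu *: c) + (mu * k) *: (x + lam *: y)
  = (d0 + t *: y) + mu *: (k *: x + c - d0).
Proof.
move=> ht.
rewrite scalerBl scale1r !scalerDr !scalerA ht scalerN.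
set D := mu *: d0; set C := mu *: c; set K := (mu * k) *: x; set T := t *: y.
rewrite -!addrA; congr (_ + _).
rewrite (addrC K T) (addrCA C T K) (addrCA (- D) T (C + K)); congr (_ + _).
by rewrite (addrC (- D)) -addrA (addrCA C K).
Qed.

Lemma idA3 (mu k al : R) (d0 c p w : X) :
  mu *: (k *: p + c + al *: w) + (1 - mu) *: d0
  = (((1 - mu) *: d0 + mu *: c) + (mu * k) *: p) + (mu * al) *: w.
Proof.
rewrite !scalerDr !scalerA.
set D := (1 - mu) *: d0; set C := mu *: c; set K := (mu * k) *: p; set W := (mu * al) *: w.
rewrite -!addrA (addrC W D) (addrCA C D W) (addrCA K D (C + W)); congr (_ + _).
by rewrite (addrCA K C W).
Qed.

Lemma TL (S1 S2 : set X) (k : R) (c w : X) : 0 < k -> S2 !=set0 ->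
  (forall p, S1 p -> exists2 al : R, 0 <= al <= 1 & clconv S2 (k *: p + c + al *: w)) ->
  rec_cone (clconv S1) `<=` rec_cone (clconv S2).
Proof.
move=> k0 [d0 Sd0] hgen y [x _ hx].
set D2 := clconv S2.
have Dd0 : D2 d0 := @clconv_sub S2 d0 Sd0.
exists d0 => // t t0.
have [->|tpos] := eqVneq t 0; first by rewrite scale0r addr0.
have {tpos t0} tpos : 0 < t by rewrite lt_neqAle eq_sym tpos t0.
pose F0 := [set p | exists2 al : R, 0 <= al <= 1 & D2 (k *: p + c + al *: w)].
have cF0 : forall a b (l : R), 0 <= l -> l <= 1 -> F0 a -> F0 b -> F0 (l *: a + (1-l) *: b).
  move=> a b l l0 l1 [a1 /andP[a10 a11] Da] [a2 /andP[a20 a21] Db].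
  exists (l * a1 + (1 - l) * a2).
    apply/andP; split; first by rewrite addr_ge0 // mulr_ge0 // subr_ge0.
    have h1 : 0 <= 1 - l by rewrite subr_ge0.
    apply: le_trans (lerD (ler_wpM2l l0 a11) (ler_wpM2l h1 a21)) _.
    by rewrite !mulr1 addrC subrK.
  rewrite -idA1; exact: clconv_convex.
have D1F : clconv S1 `<=` closure F0.
  apply: clconv_min; first exact: closure_convex.
    exact: closed_closure.
  by move=> p /hgen hp; apply: subset_closure.
pose z := d0 + t *: y.
have -> : D2 z = closure D2 z by rewrite -(closure_id D2).1 //; exact: clconv_closed.
move=> N hN.
have := @add_continuous X (z, 0) N; rewrite /= addr0 => /(_ hN).
case=> [[U V] /= [hU hV] hUV].
pose v' := k *: x + c - d0.
have hU' : nbhs z U° := nbhs_interior hU.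
have := line_cvg z v' _ hU'.
case/(nbhs_norm0P (V := R^o)) => /= e1 e10 he1.
have := line_cvg 0 w _ hV.
case/(nbhs_norm0P (V := R^o)) => /= e2 e20 he2.
pose mu := minr (minr e1 e2) 1 / 2.
have mu0 : 0 < mu by rewrite divr_gt0 // !lt_min e10 e20 ltr01.
have mu1 : mu < minr (minr e1 e2) 1.
  by rewrite /mu ltr_pdivrMr // ltr_pMr // ?ltr1n // !lt_min e10 e20 ltr01.
have mue1 : mu < e1 by move: mu1; rewrite !lt_min => /andP[/andP[]].
have mue2 : mu < e2 by move: mu1; rewrite !lt_min => /andP[/andP[]].
have mule1 : mu <= 1 by move: mu1; rewrite !lt_min => /andP[_ /ltW].
pose lam := t / (k * mu).
have lam0 : 0 <= lam by rewrite divr_ge0 // ?ltW // mulr_gt0.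
have clx := D1F _ (hx lam lam0).
pose H := fun p : X => ((1 - mu) *: d0 + mu *: c) + (mu * k) *: p.
have Hx : H (x + lam *: y) = z + mu *: v'.
  rewrite /H /z /v' (@idA2 mu k lam t) // /lam.
  have kn : k != 0 by rewrite gt_eqF.
  have mn : mu != 0 by rewrite gt_eqF.
  by field; rewrite kn mn.
have UH : U° (H (x + lam *: y)).
  rewrite Hx; apply: he1 => /=. change (`|mu : R| < e1). by rewrite gtr0_norm.
have nbH : nbhs (x + lam *: y) (H @^-1` U°).
  apply: (aff_cont ((1 - mu) *: d0 + mu *: c) (mu * k) (x + lam *: y)).
  by move: (open_interior U); rewrite openE => /(_ _ UH).
have [p [[al /andP[al0 al1] Dp] Up]] := clx _ nbH.
exists (mu *: (k *: p + c + al *: w) + (1 - mu) *: d0); split.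
  exact: clconv_convex (ltW mu0) mule1 Dp Dd0.
rewrite idA3.
apply: (hUV (H p, (mu * al) *: w)); split => /=.
  exact: interior_subset.
have /= := he2 (mu * al); rewrite add0r; apply. change (`|mu * al : R| < e2).
rewrite ger0_norm; last by rewrite mulr_ge0 // ltW.
apply: le_lt_trans mue2.
by rewrite -[leRHS]mulr1 ler_wpM2l // ltW.
Qed.


Lemma mem_conv (S : set X) u v (l : R) : 0 <= l -> l <= 1 -> S u -> S v ->
  clconv S (l *: u + (1-l) *: v).
Proof. by move=> l0 l1 Su Sv; exact: clconv_convex l0 l1 (@clconv_sub S u Su) (@clconv_sub S v Sv). Qed.

End S.

Theorem lemma3 (R : realType) (X : tvsType R) (hX : hausdorff_space X)
  (I : Type) (T1 T2 : set I) (A : I -> set X)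
  (hdisj : T1 `&` T2 = set0) (hT1 : T1 !=set0) (hT2 : T2 !=set0)
  (hA : forall t, (T1 `|` T2) t -> A t !=set0)
  (m : R) (hm : 0 < m) :
  rec_cone (clconv (\bigcup_(t in T1 `|` T2) A t))
  = rec_cone (clconv ((\bigcup_(t in T1) A t)
                      `|` (\bigcup_(t in T2) sscale m (A t))))
  /\
  rec_cone (clconv ((\bigcup_(t in T1) A t)
                      `|` (\bigcup_(t in T2) sscale m (A t))))
  = rec_cone (clconv (\bigcup_(t1 in T1) \bigcup_(t2 in T2)
                        mink_sum (A t1) (sscale m (A t2)))).
Proof.
rewrite bigcup_setU.
set A1 := \bigcup_(t in T1) A t.
set B1 := \bigcup_(t in T2) A t.
set Bm := \bigcup_(t in T2) sscale m (A t).
set S3 := \bigcup_(t1 in T1) _.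
have [t1 Tt1] := hT1.
have [a0 Aa0] := hA t1 (or_introl Tt1).
have [t2 Tt2] := hT2.
have [b0 Ab0] := hA t2 (or_intror Tt2).
have A1a0 : A1 a0 by exists t1.
have Bmb0 : Bm (m *: b0) by exists t2 => //; exists b0.
have S2n : (A1 `|` Bm) !=set0 by exists a0; left.
have S1n : (A1 `|` B1) !=set0 by exists a0; left.
have S3n : S3 !=set0.
  exists (a0 + m *: b0); exists t1 => //; exists t2 => //; exists a0 => //.
  by exists (m *: b0) => //; exists b0.
have m0 : 0 <= m by exact: ltW.
split; rewrite eqEsubset; split.
- have [m1|m1] := leP m 1.
  + apply: (@TL _ _ _ _ m 0 ((1 - m) *: a0) hm S2n).
    move=> p [[t Tt Ap]|[t Tt Ap]].
      exists 1; first by rewrite lexx ler01.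
      rewrite addr0 scale1r; apply: mem_conv => //; left => //; by exists t.
    exists 0; first by rewrite lexx ler01.
    rewrite addr0 scale0r addr0; apply: clconv_sub; right; exists t => //.
    by exists p.
  + apply: (@TL _ _ _ _ 1 0 ((1 - m^-1) *: a0) ltr01 S2n).
    move=> p [[t Tt Ap]|[t Tt Ap]].
      exists 0; first by rewrite lexx ler01.
      by rewrite scale1r addr0 scale0r addr0; apply: clconv_sub; left; exists t.
    exists 1; first by rewrite lexx ler01.
    rewrite scale1r addr0 scale1r.
    have -> : p = m^-1 *: (m *: p) by rewrite scalerA mulVf ?scale1r // gt_eqF.
    apply: mem_conv;
      [by rewrite invr_ge0 ltW | by rewrite invf_le1 // ltW | by right; exists t => //; exists p | by left].
- have [m1|m1] := leP m 1.
  + apply: (@TL _ _ _ _ 1 0 ((1 - m) *: a0) ltr01 S1n).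
    move=> p [[t Tt Ap]|[t Tt [b Ab ->]]].
      exists 0; first by rewrite lexx ler01.
      by rewrite scale1r addr0 scale0r addr0; apply: clconv_sub; left; exists t.
    exists 1; first by rewrite lexx ler01.
    rewrite scale1r addr0 scale1r.
    by apply: mem_conv => //; [right; exists t | left].
  + have mi0 : 0 < m^-1 by rewrite invr_gt0.
    apply: (@TL _ _ _ _ m^-1 0 ((1 - m^-1) *: a0) mi0 S1n).
    move=> p [[t Tt Ap]|[t Tt [b Ab ->]]].
      exists 1; first by rewrite lexx ler01.
      rewrite addr0 scale1r; apply: mem_conv;
        [exact: ltW | by rewrite invf_le1 // ltW | by left; exists t | by left].
    exists 0; first by rewrite lexx ler01.
    rewrite scalerA mulVf ?gt_eqF // scale1r addr0 scale0r addr0.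
    by apply: clconv_sub; right; exists t.
- apply: (@TL _ _ _ _ 1 (m *: b0) (a0 - m *: b0) ltr01 S3n).
  move=> p [[t Tt Ap]|[t Tt [b Ab ->]]].
    exists 0; first by rewrite lexx ler01.
    rewrite scale1r scale0r addr0; apply: clconv_sub.
    exists t => //; exists t2 => //; exists p => //; exists (m *: b0) => //.
    by exists b0.
  exists 1; first by rewrite lexx ler01.
  rewrite !scale1r -addrA (addrC (m *: b0)) subrK; apply: clconv_sub.
  exists t1 => //; exists t => //; exists a0 => //.
  by exists (m *: b); [exists b | rewrite addrC].
- have h20 : (0:R) < 2^-1 by rewrite invr_gt0 ltr0n.
  apply: (@TL _ _ _ _ 2^-1 0 0 h20 S2n).
  move=> p [t Tt [u Tu [a Aa [b' Bb' ->]]]].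
  exists 0; first by rewrite lexx ler01.
  rewrite scale0r !addr0 scalerDr.
  have -> : (2^-1 : R) *: b' = (1 - 2^-1) *: b'.
    congr (_ *: _).
    have h2 : (2:R) != 0 by rewrite pnatr_eq0.
    by field.
  apply: mem_conv;
    [exact: ltW | by rewrite invf_le1 // ?ler1n // ltr0n | by left; exists t | by right; exists u].
Qed.
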